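(* Let $c$ be the ellipse $x^2/a_c^2+y^2/b_c^2=1$, $a_c>b_c>0$, $e$ a confocal ellipse exterior to $c$ with semiaxes $(a_e,b_e)$, and $P_1\dots P_N$ an $N$-periodic billiard in $e$ with caustic $c$ with $N$ even, where $P_i=(a_e\cos t_i,b_e\sin t_i)$ and the contact point of side $P_iP_{i+1}$ with $c$ is $Q_i=(a_c\cos t_i',b_c\sin t_i')$. Put $\mathbf t_c(t)=(-a_c\sin t,\,b_c\cos t)$ and $k_h(t)=-\Vert\mathbf t_c(t)\Vert^2$. Then (indices mod $N$), for all $i$: \begin{itemize} \item if $N=4n$: $\Vert\mathbf t_c(t_i)\Vert\,\Vert\mathbf t_c(t_{i+n})\Vert=\sqrt{k_h(t_i)k_h(t_{i+n})}=a_cb_c$ and $\Vert\mathbf t_c(t_i')\Vert\,\Vert\mathbf t_c(t_{i+n}')\Vert=\sqrt{k_h(t_i')k_h(t_{i+n}')}=a_cb_c$; \item if $N=4n+2$: $\Vert\mathbf t_c(t_i)\Vert\,\Vert\mathbf t_c(t_{i+n}')\Vert=\sqrt{k_h(t_i)k_h(t_{i+n}')}=a_cb_c$ and $\Vert\mathbf t_c(t_i')\Vert\,\Vert\mathbf t_c(t_{i+n+1})\Vert=\sqrt{k_h(t_i')k_h(t_{i+n+1})}=a_cb_c$. \end{itemize}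
   Context: Confocal ellipses: $e$ has $a_e^2=a_c^2+k_e$, $b_e^2=b_c^2+k_e$ with $k_e>0$. A billiard in $e$ with caustic $c$ is a sequence of points $P_1,P_2,\dots$ on $e$ such that each line $P_iP_{i+1}$ is tangent to $c$ and $P_{i-1}P_i$, $P_iP_{i+1}$ are the two tangents from $P_i$ to $c$; it is traversed counterclockwise and is $N$-periodic if $P_{i+N}=P_i$. *)

(* Defs.v *)
From Stdlib Require Import Reals.
Open Scope R_scope.

Definition ell_pt (a b s : R) : R * R := (a * cos s, b * sin s).

Definition on_tangent (a b s : R) (p : R * R) : Prop :=
  fst p * cos s / a + snd p * sin s / b = 1.

Definition cross (p q : R * R) : R := fst p * snd q - snd p * fst q.

Definition periodic_billiard (ac bc ae be : R) (N : nat) (t t' : nat -> R) : Prop :=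
  let P i := ell_pt ae be (t i) in
  let Q i := ell_pt ac bc (t' i) in
  (forall i, P i <> P (S i)) /\
  (forall i, on_tangent ac bc (t' i) (P i) /\ on_tangent ac bc (t' i) (P (S i))) /\
  (* P_{i-1}P_i and P_iP_{i+1} are the two (distinct) tangents from P_i *)
  (forall i, Q i <> Q (S i)) /\
  (* traversed counterclockwise (around the caustic, hence the origin) *)
  (forall i, 0 < cross (P i) (P (S i))) /\
  (0 < N)%nat /\
  (forall i, P (i + N)%nat = P i) /\
  (forall k, (0 < k < N)%nat -> exists i, P (i + k)%nat <> P i).

Definition tc_norm (a b s : R) : R := sqrt ((- a * sin s) ^ 2 + (b * cos s) ^ 2).

Definition kh (a b s : R) : R := - ((- a * sin s) ^ 2 + (b * cos s) ^ 2).

(* Main.v *)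
Require Import Defs.
From Stdlib Require Import Reals Lra Psatz ZArith Lia.
Open Scope R_scope.

Definition mm a b x := a * cos x ^ 2 + b * sin x ^ 2.
Definition rr2 a b x := a ^ 2 * cos x ^ 2 + b ^ 2 * sin x ^ 2.
Definition rr a b x := sqrt (rr2 a b x).
Definition EE a b x := (b - a) * sin x * cos x.
Definition zz a b x := EE a b x / mm a b x.
Definition qq a b c x := sqrt (rr2 a b x - c ^ 2).
Definition phi a b x := x + atan (zz a b x).
Definition dl a b c x := PI / 2 - atan (c / qq a b c x).
Definition SS a b c x := phi a b x + dl a b c x.
Definition FF a b x y := a * cos x * cos y + b * sin x * sin y.
Definition prm a b c := 0 <= c /\ c < a /\ c < b.

Lemma cs1 x : cos x ^ 2 + sin x ^ 2 = 1.
Proof. pose proof (sin2_cos2 x). unfold Rsqr in H. nra. Qed.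

Lemma mm_gt a b c x : prm a b c -> c < mm a b x.
Proof. intros [h0 [h1 h2]]. unfold mm. pose proof (cs1 x).
  pose proof (pow2_ge_0 (cos x)). pose proof (pow2_ge_0 (sin x)).
  destruct (Rle_lt_dec (cos x ^ 2) (1/2)); nra. Qed.

Lemma rr2_gt a b c x : prm a b c -> c ^ 2 < rr2 a b x.
Proof. intros [h0 [h1 h2]]. unfold rr2. pose proof (cs1 x).
  pose proof (pow2_ge_0 (cos x)). pose proof (pow2_ge_0 (sin x)).
  assert (c^2 < a^2) by nra. assert (c^2 < b^2) by nra.
  destruct (Rle_lt_dec (cos x ^ 2) (1/2)); nra. Qed.

Lemma rr2_id a b x : rr2 a b x = mm a b x ^ 2 + EE a b x ^ 2.
Proof. unfold rr2, mm, EE. pose proof (cs1 x).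
  transitivity ((a^2 * cos x ^2 + b^2 * sin x ^2) * (cos x ^ 2 + sin x ^ 2)).
  rewrite H; ring. ring. Qed.

Lemma rr_pos a b c x : prm a b c -> 0 < rr a b x.
Proof. intros h. unfold rr. apply sqrt_lt_R0. pose proof (rr2_gt a b c x h). nra. Qed.

Lemma rr_sq a b c x : prm a b c -> rr a b x * rr a b x = rr2 a b x.
Proof. intros h. unfold rr. apply sqrt_sqrt. pose proof (rr2_gt a b c x h). nra. Qed.

Lemma qq_pos a b c x : prm a b c -> 0 < qq a b c x.
Proof. intros h. unfold qq. apply sqrt_lt_R0. pose proof (rr2_gt a b c x h). nra. Qed.

Lemma qq_sq a b c x : prm a b c -> qq a b c x * qq a b c x = rr2 a b x - c ^ 2.
Proof. intros h. unfold qq. apply sqrt_sqrt. pose proof (rr2_gt a b c x h). nra. Qed.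

Lemma sqrt1z a b c x : prm a b c -> sqrt (1 + (zz a b x)²) = rr a b x / mm a b x.
Proof. intros h. pose proof (mm_gt a b c x h). pose proof (rr_pos a b c x h).
  pose proof (rr_sq a b c x h). destruct h as [h0 _].
  apply sqrt_lem_1.
  - pose proof (Rle_0_sqr (zz a b x)). lra.
  - apply Rlt_le, Rdiv_lt_0_compat; lra.
  - unfold zz, Rsqr. field_simplify; [|lra|lra].
    replace (rr a b x ^ 2) with (rr2 a b x) by (rewrite <- H1; ring). rewrite rr2_id. reflexivity. Qed.

Lemma cos_phi a b c x : prm a b c -> cos (phi a b x) = a * cos x / rr a b x.
Proof. intros h. pose proof (mm_gt a b c x h). pose proof (rr_pos a b c x h).
  unfold phi. rewrite cos_plus, cos_atan, sin_atan, (sqrt1z a b c x h).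
  replace (a * cos x) with (cos x * mm a b x - sin x * EE a b x).
  unfold zz. field. destruct h; lra.
  unfold mm, EE. pose proof (cs1 x).
  transitivity (a * cos x * (cos x ^ 2 + sin x ^ 2)). ring. rewrite H1; ring. Qed.

Lemma sin_phi a b c x : prm a b c -> sin (phi a b x) = b * sin x / rr a b x.
Proof. intros h. pose proof (mm_gt a b c x h). pose proof (rr_pos a b c x h).
  unfold phi. rewrite sin_plus, cos_atan, sin_atan, (sqrt1z a b c x h).
  replace (b * sin x) with (sin x * mm a b x + cos x * EE a b x).
  unfold zz. field. destruct h; lra.
  unfold mm, EE. pose proof (cs1 x).
  transitivity (b * sin x * (cos x ^ 2 + sin x ^ 2)). ring. rewrite H1; ring. Qed.

Lemma cos_atz a b c x : prm a b c -> cos (atan (zz a b x)) = mm a b x / rr a b x.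
Proof. intros h. pose proof (mm_gt a b c x h). pose proof (rr_pos a b c x h).
  rewrite cos_atan, (sqrt1z a b c x h). field. destruct h; lra. Qed.

Lemma sqrt1cq a b c x : prm a b c -> sqrt (1 + (c / qq a b c x)²) = rr a b x / qq a b c x.
Proof. intros h. pose proof (qq_pos a b c x h). pose proof (rr_pos a b c x h).
  pose proof (rr_sq a b c x h). pose proof (qq_sq a b c x h).
  apply sqrt_lem_1.
  - pose proof (Rle_0_sqr (c / qq a b c x)). lra.
  - apply Rlt_le, Rdiv_lt_0_compat; lra.
  - unfold Rsqr. field_simplify; [|lra|lra].
    replace (rr a b x ^ 2) with (rr2 a b x) by (rewrite <- H1; ring).
    replace (qq a b c x ^ 2) with (rr2 a b x - c ^ 2) by (rewrite <- H2; ring). f_equal. ring. Qed.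

Lemma cos_dl a b c x : prm a b c -> cos (dl a b c x) = c / rr a b x.
Proof. intros h. pose proof (qq_pos a b c x h). pose proof (rr_pos a b c x h).
  unfold dl. rewrite cos_shift, sin_atan, (sqrt1cq a b c x h). field. lra. Qed.

Lemma sin_dl a b c x : prm a b c -> sin (dl a b c x) = qq a b c x / rr a b x.
Proof. intros h. pose proof (qq_pos a b c x h). pose proof (rr_pos a b c x h).
  unfold dl. rewrite sin_shift, cos_atan, (sqrt1cq a b c x h). field. lra. Qed.

Lemma atan_nonneg u : 0 <= u -> 0 <= atan u.
Proof. intros h. destruct (Rle_lt_or_eq_dec 0 u h) as [h1|h1].
  - pose proof (atan_increasing 0 u h1). rewrite atan_0 in H. lra.
  - rewrite <- h1, atan_0. lra. Qed.

Lemma dl_bnd a b c x : prm a b c -> 0 < dl a b c x <= PI / 2.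
Proof. intros h. pose proof (qq_pos a b c x h). destruct h as [h0 _].
  assert (0 <= c / qq a b c x) by (unfold Rdiv; apply Rmult_le_pos; [lra|apply Rlt_le, Rinv_0_lt_compat; lra]).
  pose proof (atan_nonneg _ H0). pose proof (atan_bound (c / qq a b c x)).
  unfold dl. lra. Qed.

Lemma atz_bnd a b c x : prm a b c -> - dl a b c x < atan (zz a b x) < dl a b c x.
Proof. intros h. pose proof (dl_bnd a b c x h). pose proof (atan_bound (zz a b x)).
  pose proof (cos_atz a b c x h). pose proof (cos_dl a b c x h).
  pose proof (mm_gt a b c x h). pose proof (rr_pos a b c x h).
  assert (hc : cos (dl a b c x) < cos (atan (zz a b x))).
  { rewrite H1, H2. unfold Rdiv. apply Rmult_lt_compat_r. apply Rinv_0_lt_compat; lra. lra. }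
  split.
  - destruct (Rlt_or_le (- dl a b c x) (atan (zz a b x))) as [h1|h1]; [exact h1|].
    exfalso. destruct (Rle_lt_or_eq_dec _ _ h1) as [h2|h2].
    + pose proof (cos_decreasing_1 (dl a b c x) (- atan (zz a b x))).
      rewrite cos_neg in H5. assert (cos (atan (zz a b x)) < cos (dl a b c x)) by (apply H5; lra).
      lra.
    + assert (atan (zz a b x) = - dl a b c x) by lra. rewrite H5, cos_neg in hc. lra.
  - destruct (Rlt_or_le (atan (zz a b x)) (dl a b c x)) as [h1|h1]; [exact h1|].
    exfalso. destruct (Rle_lt_or_eq_dec _ _ h1) as [h2|h2].
    + assert (cos (atan (zz a b x)) < cos (dl a b c x)) by (apply cos_decreasing_1; lra). lra.
    + rewrite h2 in hc. lra. Qed.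

Lemma cos_SS a b c x : prm a b c ->
  cos (SS a b c x) * rr2 a b x = a * cos x * c - b * sin x * qq a b c x.
Proof. intros h. pose proof (rr_pos a b c x h). pose proof (rr_sq a b c x h).
  unfold SS. rewrite cos_plus, (cos_phi a b c x h), (sin_phi a b c x h), (cos_dl a b c x h),
   (sin_dl a b c x h), <- H0. field. lra. Qed.

Lemma sin_SS a b c x : prm a b c ->
  sin (SS a b c x) * rr2 a b x = b * sin x * c + a * cos x * qq a b c x.
Proof. intros h. pose proof (rr_pos a b c x h). pose proof (rr_sq a b c x h).
  unfold SS. rewrite sin_plus, (cos_phi a b c x h), (sin_phi a b c x h), (cos_dl a b c x h),
   (sin_dl a b c x h), <- H0. field. lra. Qed.

Lemma FF_SS a b c x : prm a b c -> FF a b x (SS a b c x) = c.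
Proof. intros h. pose proof (rr2_gt a b c x h). pose proof (cos_SS a b c x h).
  pose proof (sin_SS a b c x h). destruct h as [h0 _].
  apply (Rmult_eq_reg_r (rr2 a b x)); [|nra].
  unfold FF. replace ((a * cos x * cos (SS a b c x) + b * sin x * sin (SS a b c x)) * rr2 a b x)
   with (a * cos x * (cos (SS a b c x) * rr2 a b x) + b * sin x * (sin (SS a b c x) * rr2 a b x)) by ring.
  rewrite H0, H1. unfold rr2. ring. Qed.

Lemma SS_bnd a b c x : prm a b c -> x < SS a b c x < x + PI.
Proof. intros h. pose proof (atz_bnd a b c x h). pose proof (dl_bnd a b c x h).
  pose proof (atan_bound (zz a b x)). unfold SS, phi. lra. Qed.

Lemma mm_pi a b x : mm a b (x + PI) = mm a b x.
Proof. unfold mm. rewrite neg_cos, neg_sin. ring. Qed.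
Lemma rr2_pi a b x : rr2 a b (x + PI) = rr2 a b x.
Proof. unfold rr2. rewrite neg_cos, neg_sin. ring. Qed.
Lemma EE_pi a b x : EE a b (x + PI) = EE a b x.
Proof. unfold EE. rewrite neg_cos, neg_sin. ring. Qed.

Lemma SS_pi a b c x : SS a b c (x + PI) = SS a b c x + PI.
Proof. unfold SS, phi, dl, zz, qq. rewrite mm_pi, rr2_pi, EE_pi. ring. Qed.

Lemma FF_rcos a b c x y : prm a b c ->
  FF a b x y = rr a b x * cos (y - phi a b x).
Proof. intros h. pose proof (rr_pos a b c x h).
  rewrite cos_minus, (cos_phi a b c x h), (sin_phi a b c x h). unfold FF. field. lra. Qed.

Lemma claimA a b c x y : prm a b c -> x <= y -> y <= x + PI ->
  (y < SS a b c x -> c < FF a b x y) /\ (SS a b c x < y -> FF a b x y < c).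
Proof. intros h hy1 hy2.
  pose proof (atz_bnd a b c x h). pose proof (dl_bnd a b c x h). pose proof (rr_pos a b c x h).
  pose proof (PI_RGT_0).
  assert (E : FF a b x y - c = rr a b x * (-2 * sin ((y - phi a b x - dl a b c x) / 2)
              * sin ((y - phi a b x + dl a b c x) / 2))).
  { rewrite (FF_rcos a b c x y h).
    transitivity (rr a b x * (cos (y - phi a b x) - cos (dl a b c x))).
    { rewrite (cos_dl a b c x h). field. lra. }
    rewrite form2. ring. }
  assert (S2 : 0 < sin ((y - phi a b x + dl a b c x) / 2)).
  { apply sin_gt_0; unfold phi; lra. }
  unfold SS in *. split; intros hs.
  - assert (sin ((y - phi a b x - dl a b c x) / 2) < 0).
    { apply sin_lt_0_var; unfold phi in *; lra. }
    assert (0 < FF a b x y - c). { rewrite E. apply Rmult_lt_0_compat; [lra|]. nra. } lra.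
  - assert (0 < sin ((y - phi a b x - dl a b c x) / 2)).
    { apply sin_gt_0; unfold phi in *; lra. }
    assert (FF a b x y - c < 0). { rewrite E.
      assert (0 < sin ((y - phi a b x - dl a b c x) / 2) * sin ((y - phi a b x + dl a b c x) / 2))
        by (apply Rmult_lt_0_compat; lra).
      nra. } lra. Qed.

Definition ww a b x y := a * cos x * sin y - b * sin x * cos y.

Lemma root_eqs a b c x y : FF a b x y = c ->
  cos y * rr2 a b x = c * (a * cos x) - ww a b x y * (b * sin x) /\
  sin y * rr2 a b x = c * (b * sin x) + ww a b x y * (a * cos x) /\
  ww a b x y ^ 2 = rr2 a b x - c ^ 2 /\
  sin (y - x) * rr2 a b x = c * EE a b x + ww a b x y * mm a b x.
Proof. intros hF. pose proof (cs1 y) as Hy. pose proof (cs1 x) as Hx.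
  unfold FF in hF. subst c. unfold rr2, ww, EE, mm. rewrite sin_minus.
  split; [|split; [|split]].
  - transitivity (cos y * (a ^ 2 * cos x ^ 2 + b ^ 2 * sin x ^ 2)); [ring|]. ring.
  - ring.
  - transitivity ((a ^ 2 * cos x ^ 2 + b ^ 2 * sin x ^ 2) * (cos y ^ 2 + sin y ^ 2) -
       (a * cos x * cos y + b * sin x * sin y) ^ 2); [|rewrite Hy; ring]. ring.
  - ring.
Qed.

Lemma root_sign a b c x y : prm a b c -> FF a b x y = c ->
  (0 < ww a b x y -> 0 < sin (y - x)) /\ (ww a b x y < 0 -> sin (y - x) < 0) /\ ww a b x y <> 0.
Proof. intros h hF. destruct (root_eqs a b c x y hF) as [_ [_ [HW HS]]].
  pose proof (rr2_gt a b c x h). pose proof (mm_gt a b c x h). pose proof (rr2_id a b x).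
  pose proof h as [h0 _].
  set (W := ww a b x y) in *. set (r2 := rr2 a b x) in *. set (m := mm a b x) in *. set (E := EE a b x) in *.
  set (s := sin (y - x)) in *.
  assert (Hd : (W * m) ^ 2 - (c * E) ^ 2 = r2 * (m ^ 2 - c ^ 2)).
  { replace ((W * m) ^ 2) with (W ^ 2 * m ^ 2) by ring. rewrite HW, H1. ring. }
  assert (Hp : 0 < r2 * (m ^ 2 - c ^ 2)). { apply Rmult_lt_0_compat; nra. }
  split; [|split].
  - intros hW. assert (0 < W * m) by nra.
    assert (0 < c * E + W * m) by nra.
    assert (0 < s * r2) by lra. nra.
  - intros hW. assert (W * m < 0) by nra.
    assert (c * E + W * m < 0) by nra.
    assert (s * r2 < 0) by lra. nra.
  - intros hW. rewrite hW in HW. nra. Qed.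

Lemma ww_SS a b c x : prm a b c -> 0 < ww a b x (SS a b c x).
Proof. intros h. pose proof (FF_SS a b c x h). destruct (root_sign a b c x _ h H) as [_ [h2 h3]].
  pose proof (SS_bnd a b c x h).
  assert (0 < sin (SS a b c x - x)) by (apply sin_gt_0; lra).
  destruct (Rtotal_order 0 (ww a b x (SS a b c x))) as [?|[?|?]]; auto.
  - exfalso; auto.
  - apply h2 in H2. lra. Qed.

Lemma uniq a b c x y : prm a b c -> FF a b x y = c -> 0 < sin (y - x) ->
  cos y = cos (SS a b c x) /\ sin y = sin (SS a b c x).
Proof. intros h hF hs.
  pose proof (FF_SS a b c x h) as hF2.
  destruct (root_sign a b c x y h hF) as [_ [h2 h3]].
  assert (hw : 0 < ww a b x y).
  { destruct (Rtotal_order 0 (ww a b x y)) as [?|[?|?]]; auto. exfalso; auto.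
    apply h2 in H. lra. }
  pose proof (ww_SS a b c x h) as hw2.
  destruct (root_eqs a b c x y hF) as [C1 [S1 [W1 _]]].
  destruct (root_eqs a b c x _ hF2) as [C2 [S2 [W2 _]]].
  assert (ew : ww a b x y = ww a b x (SS a b c x)) by nra.
  pose proof (rr2_gt a b c x h). pose proof h as [h0 _].
  assert (0 < rr2 a b x) by nra.
  split; apply (Rmult_eq_reg_r (rr2 a b x)); try lra.
  - rewrite C1, C2, ew. ring.
  - rewrite S1, S2, ew. ring. Qed.

Lemma FF_refl a b x y : FF a b (- y) (- x) = FF a b x y.
Proof. unfold FF. rewrite !cos_neg, !sin_neg. ring. Qed.

Lemma SS_mono a b c x1 x2 : prm a b c -> x1 < x2 -> SS a b c x1 < SS a b c x2.
Proof. intros h hx.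
  pose proof (SS_bnd a b c x1 h) as B1. pose proof (SS_bnd a b c x2 h) as B2.
  destruct (Rle_lt_dec (x1 + PI) x2) as [hl|hl]; [lra|].
  destruct (Rlt_or_le (SS a b c x1) (SS a b c x2)) as [hc|hc]; [exact hc|exfalso].
  set (y := SS a b c x2) in *.
  assert (F1 : c <= FF a b x1 y).
  { destruct (Rle_lt_or_eq_dec _ _ hc) as [e|e].
    - assert (hx1 : x1 <= y) by lra. assert (hy1 : y <= x1 + PI) by lra.
      destruct (claimA a b c x1 y h hx1 hy1) as [hA _]. apply Rlt_le, hA, e.
    - rewrite e. rewrite FF_SS; auto; lra. }
  assert (F2 : FF a b x2 y = c) by (apply FF_SS; auto).
  assert (g1 : - y <= - x2) by lra. assert (g2 : - x2 <= - y + PI) by lra.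
  assert (g3 : - y <= - x1) by lra. assert (g4 : - x1 <= - y + PI) by lra.
  destruct (claimA a b c (- y) (- x2) h g1 g2) as [A1 A2].
  destruct (claimA a b c (- y) (- x1) h g3 g4) as [A3 A4].
  rewrite FF_refl in A1, A2, A3, A4.
  assert (e2 : - x2 = SS a b c (- y)).
  { destruct (Rtotal_order (- x2) (SS a b c (- y))) as [?|[?|?]]; auto.
    - apply A1 in H. lra.
    - apply A2 in H. lra. }
  destruct (Rlt_or_le (SS a b c (- y)) (- x1)) as [?|?].
  - apply A4 in H. lra.
  - lra. Qed.

Lemma SS_mono_le a b c x1 x2 : prm a b c -> x1 <= x2 -> SS a b c x1 <= SS a b c x2.
Proof. intros h hx. destruct (Rle_lt_or_eq_dec _ _ hx) as [e|e].
  - apply Rlt_le, SS_mono; auto.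
  - rewrite e; lra. Qed.
Lemma N_pos ac bc ae be k p q : 0 < bc -> bc < ac -> 0 < k -> 0 < ae -> 0 < be ->
  ae ^ 2 = ac ^ 2 + k -> be ^ 2 = bc ^ 2 + k ->
  ae * bc * p + be * ac * q = ac * bc -> p - q <= 1 ->
  0 < ac * ae * q + bc * be * p.
Proof. intros h1 h2 h3 h4 h5 he hb hX hd.
  assert (hae : ac < ae) by nra. assert (hbe : bc < be) by nra.
  destruct (Rlt_or_le p 0) as [hp|hp].
  - assert (E : (ac * ae * q + bc * be * p) * be = bc * (ae * ac - p * (ac ^ 2 - bc ^ 2))).
    { transitivity (ae * (be * ac * q + ae * bc * p - ac * bc) + bc * (ae * ac - p * (ae^2 - be^2))).
      ring. rewrite he, hb. replace (be * ac * q + ae * bc * p - ac * bc) with 0 by lra. ring. }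
    assert (0 < bc * (ae * ac - p * (ac ^ 2 - bc ^ 2))).
    { apply Rmult_lt_0_compat; [lra|]. assert (0 < ac ^ 2 - bc ^ 2) by nra. nra. }
    rewrite <- E in H. nra.
  - destruct (Rlt_or_le q 0) as [hq|hq].
    + assert (E : (ac * ae * q + bc * be * p) * ae = ac * (be * bc + q * (ac ^ 2 - bc ^ 2))).
      { transitivity (be * (ae * bc * p + be * ac * q - ac * bc) + ac * (be * bc + q * (ae^2 - be^2))).
        ring. rewrite he, hb. replace (ae * bc * p + be * ac * q - ac * bc) with 0 by lra. ring. }
      assert (hq2 : - q * (be * ac + ae * bc) <= bc * (ae - ac)).
      { assert (ae * bc * (p - q) <= ae * bc * 1).
        { apply Rmult_le_compat_l; [nra|lra]. }
        nra. }
      assert (hk : (ae - ac) * (ae + ac) = k) by nra.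
      assert (hl : (ae - ac) * (ac ^ 2 - bc ^ 2) < k * ac).
      { rewrite <- hk. assert (0 < ae - ac) by lra.
        assert (ac ^ 2 - bc ^ 2 < ac * (ae + ac)) by nra. nra. }
      assert (hr : k * ac <= be * (be * ac + ae * bc)).
      { replace (be * (be * ac + ae * bc)) with ((bc ^ 2 + k) * ac + be * ae * bc) by (rewrite <- hb; ring).
        assert (0 < be * ae * bc) by (apply Rmult_lt_0_compat; [nra|lra]).
        assert (0 < bc ^ 2 * ac) by (apply Rmult_lt_0_compat; [apply pow_lt|]; lra).
        assert (0 <= k * ac) by (apply Rmult_le_pos; lra). nra. }
      assert (0 < be * ac + ae * bc) by nra.
      assert (0 < ac ^ 2 - bc ^ 2) by nra.
      assert (hm : - q * (ac ^ 2 - bc ^ 2) * (be * ac + ae * bc) < bc * be * (be * ac + ae * bc)).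
      { assert (- q * (be * ac + ae * bc) * (ac ^ 2 - bc ^ 2) <= bc * (ae - ac) * (ac ^ 2 - bc ^ 2)) by nra.
        nra. }
      assert (- q * (ac ^ 2 - bc ^ 2) < bc * be).
      { apply (Rmult_lt_reg_r (be * ac + ae * bc)); lra. }
      assert (HH : 0 < ac * (be * bc + q * (ac ^ 2 - bc ^ 2))) by (apply Rmult_lt_0_compat; lra).
      rewrite <- E in HH. nra.
    + destruct (Rle_lt_or_eq_dec 0 p hp) as [p0|p0].
      * assert (0 < bc*be*p) by (repeat apply Rmult_lt_0_compat; lra).
        assert (0 <= ac*ae*q) by (repeat apply Rmult_le_pos; lra). lra.
      * subst p. destruct (Rle_lt_or_eq_dec 0 q hq) as [q0|q0].
        -- assert (0 < ac*ae*q) by (repeat apply Rmult_lt_0_compat; lra). lra.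
        -- subst q. assert (0 < ac * bc) by (apply Rmult_lt_0_compat; lra). lra.
Qed.

Lemma N_sq ac bc ae be k cx sx cy sy : cx ^ 2 + sx ^ 2 = 1 -> cy ^ 2 + sy ^ 2 = 1 ->
  ae ^ 2 = ac ^ 2 + k -> be ^ 2 = bc ^ 2 + k ->
  ae * bc * (cx * cy) + be * ac * (sx * sy) = ac * bc ->
  (ac * ae * (sx * sy) + bc * be * (cx * cy)) ^ 2 = (ac ^ 2 * sx ^ 2 + bc ^ 2 * cx ^ 2) * (ac ^ 2 * sy ^ 2 + bc ^ 2 * cy ^ 2).
Proof. intros hx hy he hb hX.
  set (p := cx * cy) in *. set (q := sx * sy) in *.
  assert (E1 : (ac ^ 2 * sx ^ 2 + bc ^ 2 * cx ^ 2) * (ac ^ 2 * sy ^ 2 + bc ^ 2 * cy ^ 2)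
     = ac ^ 4 * q ^ 2 + bc ^ 4 * p ^ 2 + ac ^ 2 * bc ^ 2 * (1 - p ^ 2 - q ^ 2)).
  { transitivity (ac ^ 4 * q ^ 2 + bc ^ 4 * p ^ 2 + ac ^ 2 * bc ^ 2 * ((cx^2+sx^2)*(cy^2+sy^2) - p ^ 2 - q ^ 2)).
    unfold p, q. ring. rewrite hx, hy. ring. }
  rewrite E1.
  set (X := ae * bc * p + be * ac * q) in *.
  transitivity ((X - ac * bc) * (X + ac * bc)
     + ac ^ 2 * q ^ 2 * ((ae ^ 2 - ac ^ 2 - k) - (be ^ 2 - bc ^ 2 - k))
     + bc ^ 2 * p ^ 2 * ((be ^ 2 - bc ^ 2 - k) - (ae ^ 2 - ac ^ 2 - k))
     + (ac ^ 4 * q ^ 2 + bc ^ 4 * p ^ 2 + ac ^ 2 * bc ^ 2 * (1 - p ^ 2 - q ^ 2))).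
  - unfold X. ring.
  - rewrite hX, he, hb. ring. Qed.

Lemma cos1_zero D : - (2 * PI) < D < 2 * PI -> cos D = 1 -> D = 0.
Proof. intros hD hc. pose proof PI_RGT_0.
  replace D with (2 * (D / 2)) in hc by field. rewrite cos_2a_sin in hc.
  assert (hs : sin (D / 2) = 0) by nra.
  destruct (Rtotal_order D 0) as [?|[?|?]]; auto.
  - assert (sin (D / 2) < 0) by (apply sin_lt_0_var; lra). lra.
  - assert (0 < sin (D / 2)) by (apply sin_gt_0; lra). lra. Qed.

Definition sig ac bc ae be := SS (ae / ac) (be / bc) 1.
Definition rho ac bc := SS bc ac 0.

Definition hyps ac bc ae be k := 0 < bc /\ bc < ac /\ 0 < k /\ 0 < ae /\ 0 < be /\
  ae ^ 2 = ac ^ 2 + k /\ be ^ 2 = bc ^ 2 + k.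

Lemma prm_sig ac bc ae be k : hyps ac bc ae be k -> prm (ae / ac) (be / bc) 1.
Proof. intros [h1 [h2 [h3 [h4 [h5 [h6 h7]]]]]].
  assert (ac < ae) by nra. assert (bc < be) by nra.
  split; [lra|split].
  - apply (Rmult_lt_reg_r ac); [lra|]. field_simplify; lra.
  - apply (Rmult_lt_reg_r bc); [lra|]. field_simplify; lra. Qed.

Lemma prm_rho ac bc ae be k : hyps ac bc ae be k -> prm bc ac 0.
Proof. intros [h1 [h2 _]]. split; lra. Qed.

Lemma qq0 a b x : qq a b 0 x = rr a b x.
Proof. unfold qq, rr. f_equal. ring. Qed.

Lemma rho_cs ac bc ae be k x : hyps ac bc ae be k ->
  cos (rho ac bc x) = - ac * sin x / rr bc ac x /\ sin (rho ac bc x) = bc * cos x / rr bc ac x.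
Proof. intros H. pose proof (prm_rho _ _ _ _ _ H) as h.
  pose proof (cos_SS _ _ _ x h) as C. pose proof (sin_SS _ _ _ x h) as S.
  rewrite qq0 in C, S. rewrite <- (rr_sq _ _ _ x h) in C, S.
  pose proof (rr_pos _ _ _ x h). unfold rho.
  split; apply (Rmult_eq_reg_r (rr bc ac x * rr bc ac x)); try (apply Rgt_not_eq, Rmult_lt_0_compat; lra).
  - rewrite C. field. lra.
  - rewrite S. field. lra. Qed.

Lemma rr2_rho ac bc ae be k x : hyps ac bc ae be k ->
  rr2 bc ac (rho ac bc x) * rr2 bc ac x = (ac * bc) ^ 2.
Proof. intros H. destruct (rho_cs _ _ _ _ _ x H) as [C S].
  pose proof (prm_rho _ _ _ _ _ H) as h. pose proof (rr_pos _ _ _ x h). pose proof (rr_sq _ _ _ x h).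
  unfold rr2 at 1. rewrite C, S, <- H1. pose proof (cs1 x).
  field_simplify; [|lra]. 
  transitivity (bc ^ 2 * ac ^ 2 * (cos x ^ 2 + sin x ^ 2) * rr bc ac x ^ 2 / rr bc ac x ^ 2).
  field. lra. rewrite H2. field. lra. Qed.

Lemma rr_rho ac bc ae be k x : hyps ac bc ae be k ->
  rr bc ac (rho ac bc x) * rr bc ac x = ac * bc.
Proof. intros H. pose proof (prm_rho _ _ _ _ _ H) as h. unfold rr at 1 2.
  rewrite <- sqrt_mult_alt. rewrite (rr2_rho _ _ _ _ _ x H).
  destruct H as [h1 [h2 _]]. apply sqrt_lem_1; nra.
  pose proof (rr2_gt _ _ _ (rho ac bc x) h). nra. Qed.

Lemma rho_rho ac bc ae be k x : hyps ac bc ae be k -> rho ac bc (rho ac bc x) = x + PI.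
Proof. intros H. pose proof (prm_rho _ _ _ _ _ H) as h.
  destruct (rho_cs _ _ _ _ _ x H) as [C1 S1].
  destruct (rho_cs _ _ _ _ _ (rho ac bc x) H) as [C2 S2].
  pose proof (rr_rho _ _ _ _ _ x H) as R.
  pose proof (rr_pos _ _ _ x h). pose proof (rr_pos _ _ _ (rho ac bc x) h).
  destruct H as [h1 [h2 _]].
  assert (Cc : cos (rho ac bc (rho ac bc x)) = - cos x).
  { rewrite C2, S1. apply (Rmult_eq_reg_r (rr bc ac (rho ac bc x) * rr bc ac x)).
    2: apply Rgt_not_eq, Rmult_lt_0_compat; lra.
    field_simplify; try lra. transitivity (- cos x * (rr bc ac (rho ac bc x) * rr bc ac x)); [rewrite R; ring|ring]. }
  assert (Ss : sin (rho ac bc (rho ac bc x)) = - sin x).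
  { rewrite S2, C1. apply (Rmult_eq_reg_r (rr bc ac (rho ac bc x) * rr bc ac x)).
    2: apply Rgt_not_eq, Rmult_lt_0_compat; lra.
    field_simplify; try lra. transitivity (- sin x * (rr bc ac (rho ac bc x) * rr bc ac x)); [rewrite R; ring|ring]. }
  pose proof (SS_bnd _ _ _ x h). pose proof (SS_bnd _ _ _ (rho ac bc x) h).
  unfold rho in *.
  assert (D : SS bc ac 0 (SS bc ac 0 x) - (x + PI) = 0).
  { apply cos1_zero. lra. rewrite cos_minus, Cc, Ss, neg_cos, neg_sin.
    pose proof (cs1 x). nra. }
  lra. Qed.

Lemma rho_mono ac bc ae be k x y : hyps ac bc ae be k -> x < y -> rho ac bc x < rho ac bc y.
Proof. intros H. apply SS_mono. eapply prm_rho; eauto. Qed.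

Lemma comm ac bc ae be k x : hyps ac bc ae be k ->
  sig ac bc ae be (rho ac bc x) = rho ac bc (sig ac bc ae be x).
Proof. intros H. pose proof (prm_rho _ _ _ _ _ H) as h0. pose proof (prm_sig _ _ _ _ _ H) as h1.
  set (y := sig ac bc ae be x).
  assert (F1 : FF (ae / ac) (be / bc) x y = 1) by (apply FF_SS; auto).
  destruct (rho_cs _ _ _ _ _ x H) as [C1 S1].
  destruct (rho_cs _ _ _ _ _ y H) as [C2 S2].
  pose proof (rr_pos _ _ _ x h0). pose proof (rr_pos _ _ _ y h0).
  pose proof (rr_sq _ _ _ x h0). pose proof (rr_sq _ _ _ y h0).
  pose proof H as [hb [hab [hk [hae [hbe [he hbb]]]]]].
  assert (hX : ae * bc * (cos x * cos y) + be * ac * (sin x * sin y) = ac * bc).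
  { unfold FF in F1. apply (Rmult_eq_compat_l (ac * bc)) in F1.
    rewrite Rmult_1_r in F1. rewrite <- F1. field. lra. }
  assert (hd : cos x * cos y - sin x * sin y <= 1).
  { rewrite <- cos_plus. apply COS_bound. }
  pose proof (N_pos ac bc ae be k (cos x * cos y) (sin x * sin y) hb hab hk hae hbe he hbb hX hd) as Np.
  pose proof (N_sq ac bc ae be k (cos x) (sin x) (cos y) (sin y) (cs1 x) (cs1 y) he hbb hX) as Nq.
  assert (NE : ac * ae * (sin x * sin y) + bc * be * (cos x * cos y) = rr bc ac x * rr bc ac y).
  { assert (Nq2 : (ac * ae * (sin x * sin y) + bc * be * (cos x * cos y)) ^ 2 = (rr bc ac x * rr bc ac y) ^ 2).
    { rewrite Nq. replace ((rr bc ac x * rr bc ac y) ^ 2) with ((rr bc ac x * rr bc ac x) * (rr bc ac y * rr bc ac y)) by ring.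
      rewrite H2, H3. unfold rr2. ring. }
    assert (0 < rr bc ac x * rr bc ac y) by (apply Rmult_lt_0_compat; lra).
    set (N := ac * ae * (sin x * sin y) + bc * be * (cos x * cos y)) in *.
    set (M := rr bc ac x * rr bc ac y) in *.
    assert ((N - M) * (N + M) = 0) by (transitivity (N ^ 2 - M ^ 2); [ring|rewrite Nq2; ring]).
    apply Rmult_integral in H5. destruct H5; lra. }
  assert (F2 : FF (ae / ac) (be / bc) (rho ac bc x) (rho ac bc y) = 1).
  { unfold FF. rewrite C1, S1, C2, S2.
    apply (Rmult_eq_reg_r (rr bc ac x * rr bc ac y)).
    2: apply Rgt_not_eq, Rmult_lt_0_compat; lra.
    rewrite Rmult_1_l. transitivity (ac * ae * (sin x * sin y) + bc * be * (cos x * cos y)). field; lra. exact NE. }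
  pose proof (SS_bnd _ _ _ x h1) as By. fold (sig ac bc ae be x) in By. fold y in By.
  assert (r1 : rho ac bc x < rho ac bc y) by (eapply rho_mono; eauto; lra).
  assert (r2 : rho ac bc y < rho ac bc x + PI).
  { unfold rho. rewrite <- (SS_pi bc ac 0 x). apply SS_mono; auto. lra. }
  assert (hs : 0 < sin (rho ac bc y - rho ac bc x)) by (apply sin_gt_0; lra).
  destruct (uniq _ _ _ _ _ h1 F2 hs) as [U1 U2].
  fold (sig ac bc ae be (rho ac bc x)) in U1, U2.
  pose proof (SS_bnd _ _ _ (rho ac bc x) h1) as B1. fold (sig ac bc ae be (rho ac bc x)) in B1.
  pose proof (SS_bnd _ _ _ x h0) as B2. fold (rho ac bc x) in B2.
  pose proof (SS_bnd _ _ _ y h0) as B3. fold (rho ac bc y) in B3.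
  assert (D : rho ac bc y - sig ac bc ae be (rho ac bc x) = 0).
  { apply cos1_zero. lra. rewrite cos_minus, U1, U2.
    pose proof (cs1 (sig ac bc ae be (rho ac bc x))). nra. }
  lra. Qed.
Fixpoint it (f : R -> R) (n : nat) (x : R) : R :=
  match n with O => x | S m => f (it f m x) end.

Lemma it_add f n m x : it f (n + m) x = it f n (it f m x).
Proof. induction n; simpl; auto. rewrite IHn; auto. Qed.

Lemma it_mono f (Hm : forall x y, x < y -> f x < f y) n x y : x < y -> it f n x < it f n y.
Proof. intros h; induction n; simpl; auto. Qed.

Lemma f_shiftn f (Hp : forall x, f (x + PI) = f x + PI) n x : f (x + INR n * PI) = f x + INR n * PI.
Proof. induction n.
  - simpl. rewrite !Rmult_0_l, !Rplus_0_r. auto.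
  - rewrite S_INR. replace (x + (INR n + 1) * PI) with ((x + INR n * PI) + PI) by ring.
    rewrite Hp, IHn. ring. Qed.

Lemma it_shift f (Hp : forall x, f (x + PI) = f x + PI) m n x :
  it f m (x + INR n * PI) = it f m x + INR n * PI.
Proof. induction m; simpl; auto. rewrite IHm. apply f_shiftn; auto. Qed.

Lemma it_comm f g (Hc : forall x, f (g x) = g (f x)) n x : it f n (g x) = g (it f n x).
Proof. induction n; simpl; auto. rewrite IHn; auto. Qed.

Lemma it_gt f (Hb : forall x, x < f x) n x : (0 < n)%nat -> x < it f n x.
Proof. induction n; intros h; [lia|]. simpl. destruct n.
  - simpl. apply Hb.
  - specialize (IHn ltac:(lia)). specialize (Hb (it f (S n) x)). lra. Qed.

Lemma cos1_zero' D : - (2 * PI) < D < 2 * PI -> cos D = 1 -> D = 0.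
Proof. intros hD hc. pose proof PI_RGT_0.
  replace D with (2 * (D / 2)) in hc by field. rewrite cos_2a_sin in hc.
  assert (hs : sin (D / 2) = 0) by nra.
  destruct (Rtotal_order D 0) as [?|[?|?]]; auto.
  - assert (sin (D / 2) < 0) by (apply sin_lt_0_var; lra). lra.
  - assert (0 < sin (D / 2)) by (apply sin_gt_0; lra). lra. Qed.

Lemma core (f g : R -> R) (u0 : R) (N H : nat)
  (fm : forall x y, x < y -> f x < f y) (fp : forall x, f (x + PI) = f x + PI)
  (fb : forall x, x < f x)
  (gm : forall x y, x < y -> g x < g y) (gp : forall x, g (x + PI) = g x + PI)
  (gg : forall x, g (g x) = x + PI) (fg : forall x, f (g x) = g (f x))
  (hN : N = (2 * H)%nat) (hH : (0 < H)%nat)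
  (hper : cos (it f (2 * N) u0) = cos u0 /\ sin (it f (2 * N) u0) = sin u0)
  (hnd : exists i, ~ (cos (it f (2 * i + N) u0) = cos (it f (2 * i) u0) /\
                      sin (it f (2 * i + N) u0) = sin (it f (2 * i) u0))) :
  exists m : nat, forall j, it f (j + H) u0 = g (it f j u0) + INR m * PI.
Proof.
  pose proof PI_RGT_0 as hpi.
  set (D := it f (2 * N) u0 - u0).
  assert (hD : 0 < D). { unfold D. pose proof (it_gt f fb (2 * N) u0 ltac:(lia)). lra. }
  assert (hc : cos D = 1).
  { unfold D. rewrite cos_minus, (proj1 hper), (proj2 hper). pose proof (sin2_cos2 u0).
    unfold Rsqr in H0. lra. }
  assert (hs : sin (D / 2) = 0).
  { replace D with (2 * (D / 2)) in hc by field. rewrite cos_2a_sin in hc. nra. }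
  destruct (sin_eq_0_0 _ hs) as [z hz].
  assert (zpos : (0 < z)%Z).
  { apply lt_IZR. simpl. assert (0 < D / 2) by lra. rewrite hz in H0. nra. }
  set (w := Z.to_nat z).
  assert (hw : D = 2 * INR w * PI).
  { unfold w. rewrite INR_IZR_INZ, Z2Nat.id by lia. lra. }
  assert (S2 : forall j, it f (j + 2 * N) u0 = it f j u0 + INR (2 * w) * PI).
  { induction j.
    - rewrite Nat.add_0_l. change (it f 0 u0) with u0. rewrite mult_INR. simpl (INR 2). unfold D in hw. lra.
    - replace (S j + 2 * N)%nat with (S (j + 2 * N)) by lia.
      change (it f (S (j + 2 * N)) u0) with (f (it f (j + 2 * N) u0)).
      change (it f (S j) u0) with (f (it f j u0)).
      rewrite IHj. apply f_shiftn; auto. }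
  assert (S1 : forall j, it f (j + N) u0 = it f j u0 + INR w * PI).
  { intros j. set (a := it f j u0). set (G := it f N).
    assert (GG : G (G a) = a + INR (2 * w) * PI).
    { unfold G, a. rewrite <- !it_add. rewrite <- S2. f_equal. lia. }
    assert (Gsh : G (a + INR w * PI) = G a + INR w * PI) by (apply it_shift; auto).
    assert (GA : G a = it f (j + N) u0) by (unfold G, a; rewrite <- it_add; f_equal; lia).
    rewrite <- GA. rewrite mult_INR in GG. simpl (INR 2) in GG.
    destruct (Rtotal_order (G a) (a + INR w * PI)) as [l|[e|l]]; auto.
    - exfalso. pose proof (it_mono f fm N _ _ l). fold G in H0. lra.
    - exfalso. pose proof (it_mono f fm N _ _ l). fold G in H0. lra. }
  destruct (Nat.Even_or_Odd w) as [[m hm]|[m hm]].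
  - exfalso. destruct hnd as [i hi]. apply hi.
    rewrite S1, hm. rewrite mult_INR. simpl (INR 2).
    replace (it f (2 * i) u0 + 2 * INR m * PI) with (it f (2 * i) u0 + 2 * INR m * PI) by ring.
    split; [apply cos_period|apply sin_period].
  - exists m. intros j. set (a := it f j u0). set (G := it f H).
    assert (GG : G (G a) = a + (2 * INR m + 1) * PI).
    { unfold G, a. rewrite <- !it_add. replace (H + H + j)%nat with (j + N)%nat by lia.
      rewrite S1, hm. rewrite plus_INR, mult_INR. simpl (INR 2). simpl (INR 1). ring. }
    assert (Gsh : forall x, G (x + INR m * PI) = G x + INR m * PI) by (intros; apply it_shift; auto).
    assert (gsh : forall x, g (x + INR m * PI) = g x + INR m * PI) by (intros; apply f_shiftn; auto).
    assert (Gg : forall x, G (g x) = g (G x)) by (intros; apply it_comm; auto).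
    set (c := G a - INR m * PI).
    assert (Gc : G c = a + (INR m + 1) * PI).
    { assert (G (c + INR m * PI) = G c + INR m * PI) by apply Gsh.
      replace (c + INR m * PI) with (G a) in H0 by (unfold c; ring). lra. }
    assert (gc : g c + INR m * PI = G (g a)).
    { rewrite Gg. rewrite <- gsh. unfold c. f_equal. ring. }
    assert (ga : g (g a) = a + PI) by apply gg.
    assert (c = g a).
    { destruct (Rtotal_order c (g a)) as [l|[e|l]]; auto.
      - exfalso. pose proof (gm _ _ l). pose proof (it_mono f fm H _ _ l). fold G in H1. lra.
      - exfalso. pose proof (gm _ _ l). pose proof (it_mono f fm H _ _ l). fold G in H1. lra. }
    assert (GA : G a = it f (j + H) u0) by (unfold G, a; rewrite <- it_add; f_equal; lia).
    rewrite <- GA. unfold c in H0. lra.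
Qed.

Lemma FF_sym a b x y : FF a b x y = FF a b y x.
Proof. unfold FF. ring. Qed.

Lemma orient a b c s x1 x2 : prm a b c -> 0 < c -> FF a b s x1 = c -> FF a b s x2 = c ->
  0 < sin (x2 - x1) -> sin (x1 - s) < 0 /\ 0 < sin (x2 - s).
Proof. intros h hc F1 F2 hs.
  destruct (root_eqs a b c s x1 F1) as [C1 [S1 [W1 _]]].
  destruct (root_eqs a b c s x2 F2) as [C2 [S2 [W2 _]]].
  destruct (root_sign a b c s x1 h F1) as [_ [n1 z1]].
  destruct (root_sign a b c s x2 h F2) as [p2 [_ z2]].
  pose proof (rr2_gt a b c s h). pose proof h as [h0 _].
  assert (r2p : 0 < rr2 a b s) by nra.
  set (w1 := ww a b s x1) in *. set (w2 := ww a b s x2) in *.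
  set (r2 := rr2 a b s) in *.
  assert (E : sin (x2 - x1) * r2 * r2 = c * (w2 - w1) * r2).
  { rewrite sin_minus.
    transitivity ((sin x2 * r2) * (cos x1 * r2) - (cos x2 * r2) * (sin x1 * r2)); [ring|].
    rewrite C1, S1, C2, S2. unfold r2, rr2. ring. }
  assert (w1 < w2).
  { assert (HH : 0 < sin (x2 - x1) * r2 * r2) by (apply Rmult_lt_0_compat; [apply Rmult_lt_0_compat|]; lra).
    rewrite E in HH. assert (0 < c * (w2 - w1)) by nra. nra. }
  assert (w1 = - w2) by nra.
  assert (0 < w2) by nra.
  split.
  - apply n1. lra.
  - apply p2. lra. Qed.

Lemma step_cs a b c x x' y : prm a b c -> cos x' = cos x -> sin x' = sin x ->
  FF a b x y = c -> 0 < sin (y - x) -> cos y = cos (SS a b c x') /\ sin y = sin (SS a b c x').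
Proof. intros h e1 e2 F s. apply uniq; auto.
  - unfold FF in *. rewrite e1, e2. auto.
  - rewrite sin_minus in *. rewrite e1, e2. auto. Qed.

Lemma rr2_cs a b x y : cos x = cos y -> sin x = sin y -> rr2 a b x = rr2 a b y.
Proof. intros e1 e2. unfold rr2. rewrite e1, e2. auto. Qed.

Lemma rr2_shiftn a b n x : rr2 a b (x + INR n * PI) = rr2 a b x.
Proof. induction n.
  - simpl. f_equal. ring.
  - rewrite S_INR. replace (x + (INR n + 1) * PI) with ((x + INR n * PI) + PI) by ring.
    rewrite rr2_pi. auto. Qed.

Lemma fin ac bc x y : 0 < bc -> bc < ac -> rr2 bc ac x * rr2 bc ac y = (ac * bc) ^ 2 ->
  tc_norm ac bc x * tc_norm ac bc y = ac * bc /\ sqrt (kh ac bc x * kh ac bc y) = ac * bc.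
Proof. intros h1 h2 E.
  assert (T : forall s, tc_norm ac bc s = sqrt (rr2 bc ac s)) by (intros; unfold tc_norm, rr2; f_equal; ring).
  assert (K : forall s, kh ac bc s = - rr2 bc ac s) by (intros; unfold kh, rr2; ring).
  assert (p1 : 0 <= rr2 bc ac x) by (unfold rr2; nra).
  assert (s1 : sqrt ((ac * bc) ^ 2) = ac * bc) by (apply sqrt_lem_1; nra).
  split.
  - rewrite !T, <- sqrt_mult_alt by exact p1. rewrite E. exact s1.
  - rewrite !K. replace (- rr2 bc ac x * - rr2 bc ac y) with (rr2 bc ac x * rr2 bc ac y) by ring.
    rewrite E. exact s1. Qed.

Lemma main_key (ac bc ae be k : R) (N : nat) (t t' : nat -> R) (H : nat) :
  0 < bc -> bc < ac -> 0 < k -> 0 < ae -> 0 < be ->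
  ae ^ 2 = ac ^ 2 + k -> be ^ 2 = bc ^ 2 + k ->
  periodic_billiard ac bc ae be N t t' -> N = (2 * H)%nat -> (0 < H)%nat ->
  (forall i, cos (it (sig ac bc ae be) (2 * i) (t 0%nat)) = cos (t i) /\
             sin (it (sig ac bc ae be) (2 * i) (t 0%nat)) = sin (t i) /\
             cos (it (sig ac bc ae be) (2 * i + 1) (t 0%nat)) = cos (t' i) /\
             sin (it (sig ac bc ae be) (2 * i + 1) (t 0%nat)) = sin (t' i)) /\
  forall j, rr2 bc ac (it (sig ac bc ae be) (j + H) (t 0%nat)) * rr2 bc ac (it (sig ac bc ae be) j (t 0%nat))
     = (ac * bc) ^ 2.
Proof.
  intros h1 h2 h3 h4 h5 h6 h7 hb hN hH.
  assert (Hy : hyps ac bc ae be k) by (repeat split; auto).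
  pose proof (prm_sig _ _ _ _ _ Hy) as ps. pose proof (prm_rho _ _ _ _ _ Hy) as pr.
  unfold periodic_billiard in hb. cbv zeta in hb.
  destruct hb as [b1 [b2 [b3 [b4 [b5 [b6 b7]]]]]].
  assert (tg : forall i, FF (ae / ac) (be / bc) (t i) (t' i) = 1 /\ FF (ae / ac) (be / bc) (t (S i)) (t' i) = 1).
  { intros i. destruct (b2 i) as [u1 u2]. unfold on_tangent, ell_pt in u1, u2. simpl in u1, u2.
    unfold FF. split; [rewrite <- u1|rewrite <- u2]; field; lra. }
  assert (or : forall i, 0 < sin (t' i - t i) /\ 0 < sin (t (S i) - t' i)).
  { intros i. destruct (tg i) as [g1 g2]. rewrite FF_sym in g1, g2.
    assert (cr : 0 < sin (t (S i) - t i)).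
    { specialize (b4 i). unfold cross, ell_pt in b4. simpl in b4. rewrite sin_minus.
      assert (0 < ae * be) by nra. nra. }
    destruct (orient _ _ _ _ _ _ ps ltac:(lra) g1 g2 cr) as [o1 o2].
    split; auto. replace (t' i - t i) with (- (t i - t' i)) by ring. rewrite sin_neg. lra. }
  set (sg := sig ac bc ae be).
  assert (orb : forall i, cos (it sg (2 * i) (t 0%nat)) = cos (t i) /\
             sin (it sg (2 * i) (t 0%nat)) = sin (t i) /\
             cos (it sg (2 * i + 1) (t 0%nat)) = cos (t' i) /\
             sin (it sg (2 * i + 1) (t 0%nat)) = sin (t' i)).
  { induction i.
    - simpl. destruct (tg 0%nat) as [g1 _]. destruct (or 0%nat) as [o1 _].
      destruct (step_cs _ _ _ (t 0%nat) (t 0%nat) (t' 0%nat) ps eq_refl eq_refl g1 o1) as [e1 e2].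
      repeat split; auto.
    - destruct IHi as [c1 [s1 [c2 s2]]].
      destruct (tg i) as [_ g2]. destruct (tg (S i)) as [g3 _].
      destruct (or i) as [_ o2]. destruct (or (S i)) as [o3 _].
      rewrite FF_sym in g2.
      destruct (step_cs _ _ _ (t' i) _ (t (S i)) ps c2 s2 g2 o2) as [e1 e2].
      replace (2 * S i)%nat with (S (2 * i + 1)) by lia.
      replace (S (2 * i + 1) + 1)%nat with (S (S (2 * i + 1))) by lia.
      change (it sg (S (2 * i + 1)) (t 0%nat)) with (sg (it sg (2 * i + 1) (t 0%nat))).
      change (it sg (S (S (2 * i + 1))) (t 0%nat)) with (sg (sg (it sg (2 * i + 1) (t 0%nat)))).
      destruct (step_cs _ _ _ (t (S i)) _ (t' (S i)) ps (eq_sym e1) (eq_sym e2) g3 o3) as [e3 e4].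
      split; [symmetry; exact e1|split; [symmetry; exact e2|split; [symmetry; exact e3|symmetry; exact e4]]]. }
  split; [exact orb|].
  assert (cs_t : forall i j, t i = t j \/ True -> True) by auto.
  destruct (core sg (rho ac bc) (t 0%nat) N H) as [m hm].
  - intros; apply SS_mono; auto.
  - intros; apply SS_pi.
  - intros; apply (SS_bnd _ _ _ _ ps).
  - intros; apply SS_mono; auto.
  - intros; apply SS_pi.
  - intros; eapply rho_rho; eauto.
  - intros; eapply comm; eauto.
  - exact hN.
  - exact hH.
  - destruct (orb N) as [c1 [s1 _]]. specialize (b6 0%nat). simpl in b6.
    unfold ell_pt in b6. injection b6 as e1 e2.
    rewrite c1, s1. split.
    + apply (Rmult_eq_reg_l ae); lra.
    + apply (Rmult_eq_reg_l be); lra.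
  - destruct (b7 H ltac:(lia)) as [i hi]. exists i. intros [c1 s1].
    apply hi. destruct (orb (i + H)%nat) as [c2 [s2 _]]. destruct (orb i) as [c3 [s3 _]].
    replace (2 * (i + H))%nat with (2 * i + N)%nat in c2, s2 by lia.
    unfold ell_pt. f_equal.
    + rewrite <- c2, <- c3, c1. auto.
    + rewrite <- s2, <- s3, s1. auto.
  - intros j. rewrite hm. rewrite rr2_shiftn. apply (rr2_rho _ _ _ _ _ _ Hy).
Qed.

Theorem lemma2 (ac bc ae be k : R) (N : nat) (t t' : nat -> R) :
  0 < bc -> bc < ac -> 0 < k -> 0 < ae -> 0 < be ->
  ae ^ 2 = ac ^ 2 + k -> be ^ 2 = bc ^ 2 + k ->
  periodic_billiard ac bc ae be N t t' ->
  forall n i : nat,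
    ((N = 4 * n)%nat ->
       tc_norm ac bc (t i) * tc_norm ac bc (t (i + n)%nat) = ac * bc /\
       sqrt (kh ac bc (t i) * kh ac bc (t (i + n)%nat)) = ac * bc /\
       tc_norm ac bc (t' i) * tc_norm ac bc (t' (i + n)%nat) = ac * bc /\
       sqrt (kh ac bc (t' i) * kh ac bc (t' (i + n)%nat)) = ac * bc) /\
    ((N = 4 * n + 2)%nat ->
       tc_norm ac bc (t i) * tc_norm ac bc (t' (i + n)%nat) = ac * bc /\
       sqrt (kh ac bc (t i) * kh ac bc (t' (i + n)%nat)) = ac * bc /\
       tc_norm ac bc (t' i) * tc_norm ac bc (t (i + n + 1)%nat) = ac * bc /\
       sqrt (kh ac bc (t' i) * kh ac bc (t (i + n + 1)%nat)) = ac * bc).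
Proof.
  intros h1 h2 h3 h4 h5 h6 h7 hb n i.
  assert (Npos : (0 < N)%nat).
  { unfold periodic_billiard in hb. cbv zeta in hb. tauto. }
  set (u := fun j => it (sig ac bc ae be) j (t 0%nat)).
  split; intros hN.
  - destruct (main_key ac bc ae be k N t t' (2 * n) h1 h2 h3 h4 h5 h6 h7 hb ltac:(lia) ltac:(lia))
      as [orb key].
    fold u in orb, key.
    destruct (orb i) as [c1 [s1 [c2 s2]]]. destruct (orb (i + n)%nat) as [c3 [s3 [c4 s4]]].
    assert (E1 : rr2 bc ac (t i) * rr2 bc ac (t (i + n)%nat) = (ac * bc) ^ 2).
    { rewrite <- (rr2_cs _ _ _ _ c1 s1), <- (rr2_cs _ _ _ _ c3 s3).
      rewrite <- (key (2 * i)%nat). replace (2 * i + 2 * n)%nat with (2 * (i + n))%nat by lia. ring. }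
    assert (E2 : rr2 bc ac (t' i) * rr2 bc ac (t' (i + n)%nat) = (ac * bc) ^ 2).
    { rewrite <- (rr2_cs _ _ _ _ c2 s2), <- (rr2_cs _ _ _ _ c4 s4).
      rewrite <- (key (2 * i + 1)%nat). replace (2 * i + 1 + 2 * n)%nat with (2 * (i + n) + 1)%nat by lia. ring. }
    destruct (fin _ _ _ _ h1 h2 E1). destruct (fin _ _ _ _ h1 h2 E2). tauto.
  - destruct (main_key ac bc ae be k N t t' (2 * n + 1) h1 h2 h3 h4 h5 h6 h7 hb ltac:(lia) ltac:(lia))
      as [orb key].
    fold u in orb, key.
    destruct (orb i) as [c1 [s1 [c2 s2]]]. destruct (orb (i + n)%nat) as [c3 [s3 [c4 s4]]].
    destruct (orb (i + n + 1)%nat) as [c5 [s5 _]].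
    assert (E1 : rr2 bc ac (t i) * rr2 bc ac (t' (i + n)%nat) = (ac * bc) ^ 2).
    { rewrite <- (rr2_cs _ _ _ _ c1 s1), <- (rr2_cs _ _ _ _ c4 s4).
      rewrite <- (key (2 * i)%nat). replace (2 * i + (2 * n + 1))%nat with (2 * (i + n) + 1)%nat by lia. ring. }
    assert (E2 : rr2 bc ac (t' i) * rr2 bc ac (t (i + n + 1)%nat) = (ac * bc) ^ 2).
    { rewrite <- (rr2_cs _ _ _ _ c2 s2), <- (rr2_cs _ _ _ _ c5 s5).
      rewrite <- (key (2 * i + 1)%nat). replace (2 * i + 1 + (2 * n + 1))%nat with (2 * (i + n + 1))%nat by lia. ring. }
    destruct (fin _ _ _ _ h1 h2 E1). destruct (fin _ _ _ _ h1 h2 E2). tauto.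
Qed.
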